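(* Let $\mathcal A=\{p_1,\dots,p_n\}\subset\mathbb R^2$ be a point set not contained in a line, with $p_1$ and $p_2$ having different second coordinates. Then the expansion cone $\overline{Y_0}(\mathcal A)$ has full dimension $3n-3$ in $S$, and it is a pointed polyhedral cone, i.e. it contains no pair of opposite non-zero vectors.
   Context: Write $v_i=(v_i^1,v_i^2)\in\mathbb R^2$. Define $$S=\{(v_1,\dots,v_n,t_1,\dots,t_n)\in(\mathbb R^2)^n\times\mathbb R^n:\ v_1^1=v_1^2=v_2^1=0\},$$ a $(3n-3)$-dimensional subspace of $\mathbb R^{3n}$. The expansion cone $\overline{Y_0}(\mathcal A)$ is the set of $(v,t)\in S$ satisfying both of: - $\langle p_i-p_j,v_i-v_j\rangle-|p_i-p_j|(t_i+t_j)\ge 0$ for all $1\le i<j\le n$; - $t_j\ge 0$ for all $j$. *)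

(* Defs.v *)
From HB Require Import structures.
From mathcomp Require Import all_boot all_order all_algebra.
From mathcomp Require Import reals.
Set Implicit Arguments. Unset Strict Implicit. Unset Printing Implicit Defensive.
Import Order.TTheory GRing.Theory Num.Theory.
Local Open Scope ring_scope.

Section Defs.
Variable R : realType.

Definition dot2 (a b : R * R) : R := a.1 * b.1 + a.2 * b.2.
Definition sub2 (a b : R * R) : R * R := (a.1 - b.1, a.2 - b.2).
Definition norm2 (a : R * R) : R := Num.sqrt (dot2 a a).

(* A configuration (v_1,...,v_N,t_1,...,t_N) in R^{3N} is a row vector of
   length N + N + N: first block = first coordinates v_i^1, second block =
   second coordinates v_i^2, third block = t_i. *)
Definition vec1 N (x : 'rV[R]_(N + N + N)) (i : 'I_N) : R :=
  x ord0 (lshift N (lshift N i)).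
Definition vec2 N (x : 'rV[R]_(N + N + N)) (i : 'I_N) : R :=
  x ord0 (lshift N (rshift N i)).
Definition vecv N (x : 'rV[R]_(N + N + N)) (i : 'I_N) : R * R :=
  (vec1 x i, vec2 x i).
Definition tcoord N (x : 'rV[R]_(N + N + N)) (i : 'I_N) : R :=
  x ord0 (rshift (N + N) i).

(* The first two indices (p_1 and p_2 of the paper); we index from 0. *)
Definition idx1 n : 'I_n.+2 := ord0.
Definition idx2 n : 'I_n.+2 := lift ord0 ord0.

Definition inS n (x : 'rV[R]_(n.+2 + n.+2 + n.+2)) : Prop :=
  vec1 x (idx1 n) = 0 /\ vec2 x (idx1 n) = 0 /\ vec1 x (idx2 n) = 0.

Definition expansion_cone n (p : 'I_n.+2 -> R * R)
  (x : 'rV[R]_(n.+2 + n.+2 + n.+2)) : Prop :=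
  inS x /\
  (forall i j : 'I_n.+2, (i < j)%N ->
     dot2 (sub2 (p i) (p j)) (sub2 (vecv x i) (vecv x j))
     - norm2 (sub2 (p i) (p j)) * (tcoord x i + tcoord x j) >= 0) /\
  (forall j : 'I_n.+2, tcoord x j >= 0).

Definition collinear N (p : 'I_N -> R * R) : Prop :=
  exists a b c : R, (a, b) != (0, 0) /\ forall i, a * (p i).1 + b * (p i).2 = c.

End Defs.

(* Main.v *)
Require Import Defs.
From HB Require Import structures.
From mathcomp Require Import all_boot all_order all_algebra.
From mathcomp Require Import reals ring lra.
Import Order.TTheory GRing.Theory Num.Theory.
Local Open Scope ring_scope.

Section S.
Variable R : realType.

Lemma perp2 (a1 a2 b1 b2 z1 z2 : R) :
  a1 * z1 + a2 * z2 = 0 -> b1 * z1 + b2 * z2 = 0 -> a1 * b2 - a2 * b1 != 0 ->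
  z1 = 0 /\ z2 = 0.
Proof.
move=> h1 h2 hd.
have e1 : z1 * (a1 * b2 - a2 * b1) = b2 * (a1 * z1 + a2 * z2) - a2 * (b1 * z1 + b2 * z2) by ring.
have e2 : z2 * (a1 * b2 - a2 * b1) = a1 * (b1 * z1 + b2 * z2) - b1 * (a1 * z1 + a2 * z2) by ring.
rewrite h1 h2 !mulr0 subrr in e1 e2.
move/eqP: e1; rewrite mulf_eq0 (negbTE hd) orbF => /eqP ->.
move/eqP: e2; rewrite mulf_eq0 (negbTE hd) orbF => /eqP ->.
by [].
Qed.

Variable n : nat.
Local Notation N := n.+2.
Local Notation M := (N + N + N)%N.
Variable p : 'I_N -> R * R.

Lemma pointed : ~ collinear p -> (p (idx1 n)).2 != (p (idx2 n)).2 ->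
  forall x : 'rV[R]_M, expansion_cone p x -> expansion_cone p (- x) -> x = 0.
Proof.
move=> hnc hb x [[h11 [h12 h21]] [hC ht]] [_ [hC' ht']].
have t0 : forall j, tcoord x j = 0.
  move=> j; apply/eqP; rewrite eq_le ht andbT.
  by have := ht' j; rewrite /tcoord mxE oppr_ge0.
pose D i j := dot2 (sub2 (p i) (p j)) (sub2 (vecv x i) (vecv x j)).
have D0 : forall i j, D i j = 0.
  have H : forall i j : 'I_N, (i < j)%N -> D i j = 0.
    move=> i j lij; have := hC i j lij; have := hC' i j lij.
    rewrite !t0 addr0 mulr0 subr0 -/(D i j) => h1 h2.
    have e : dot2 (sub2 (p i) (p j)) (sub2 (vecv (- x) i) (vecv (- x) j)) = - D i j.
      by rewrite /D /vecv /vec1 /vec2 /dot2 /sub2 /= !mxE; ring.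
    move: h1; rewrite /tcoord !mxE -!/(tcoord x _) !t0 oppr0 addr0 mulr0 subr0 e oppr_ge0.
    by move=> h1; apply/eqP; rewrite eq_le h1 h2.
  move=> i j; case: (ltngtP i j) => [/H //| lji | /val_inj ->].
    by rewrite -(H j i lji) /D /dot2 /sub2 /=; ring.
  by rewrite /D /dot2 /sub2 /=; ring.
have DE : forall i j, D i j = ((p i).1 - (p j).1) * (vec1 x i - vec1 x j)
   + ((p i).2 - (p j).2) * (vec2 x i - vec2 x j) by [].
set P1 := p (idx1 n) in hb *; set P2 := p (idx2 n) in hb *.
have v22 : vec2 x (idx2 n) = 0.
  have := D0 (idx1 n) (idx2 n); rewrite DE h11 h12 h21 -/P1 -/P2.
  move=> /eqP; rewrite subrr sub0r mulr0 add0r mulrN oppr_eq0 mulf_eq0 subr_eq0 (negbTE hb) /=.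
  by move/eqP.
have Dg : forall i, vec1 x i * ((p i).1 - P1.1) + vec2 x i * ((p i).2 - P1.2) = 0.
  by move=> i; rewrite -(D0 i (idx1 n)) DE h11 h12 !subr0 -/P1 mulrC [X in _ + X]mulrC.
have Dh : forall i, vec1 x i * (P2.1 - P1.1) + vec2 x i * (P2.2 - P1.2) = 0.
  move=> i; have := D0 i (idx2 n); rewrite DE h21 v22 !subr0 -/P2 => e.
  by rewrite -(Dg i) -[RHS]subr0 -e; ring.
have Dk : forall i k, vec1 x k = 0 -> vec2 x k = 0 ->
   vec1 x i * ((p k).1 - P1.1) + vec2 x i * ((p k).2 - P1.2) = 0.
  move=> i k e1 e2; have := D0 i k; rewrite DE e1 e2 !subr0 => e.
  by rewrite -(Dg i) -[RHS]subr0 -e; ring.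
pose det k := (P2.1 - P1.1) * ((p k).2 - P1.2) - (P2.2 - P1.2) * ((p k).1 - P1.1).
case: (pickP (fun k => det k != 0)) => [k hk | hno]; last first.
  exfalso; apply: hnc.
  exists (- (P2.2 - P1.2)), (P2.1 - P1.1), (- (P2.2 - P1.2) * P1.1 + (P2.1 - P1.1) * P1.2).
  split.
    apply/negP; rewrite xpair_eqE => /andP[/eqP ha _].
    by move: hb; rewrite eq_sym -subr_eq0 -oppr_eq0 ha eqxx.
  move=> i; have /negbFE/eqP e := hno i.
  apply/eqP; rewrite -subr_eq0 -[X in _ == X]e /det; apply/eqP; ring.
have [vk1 vk2] : vec1 x k = 0 /\ vec2 x k = 0.
  apply: (perp2 (P2.1 - P1.1) (P2.2 - P1.2) ((p k).1 - P1.1) ((p k).2 - P1.2)); last exact: hk.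
    by rewrite -(Dh k); ring.
  by rewrite -(Dg k); ring.
have vi : forall i, vec1 x i = 0 /\ vec2 x i = 0.
  move=> i; apply: (perp2 (P2.1 - P1.1) (P2.2 - P1.2) ((p k).1 - P1.1) ((p k).2 - P1.2)); last exact: hk.
    by rewrite -(Dh i); ring.
  by rewrite -(Dk i k vk1 vk2); ring.
apply/matrixP => i0 k0; rewrite [i0]ord1 mxE.
rewrite -(splitK k0); case: (split k0) => [k1|j]; last exact: t0.
rewrite -(splitK k1); case: (split k1) => [j|j]; [exact: (vi j).1 | exact: (vi j).2].
Qed.

Definition Cf (x : 'rV[R]_M) (i j : 'I_N) : R :=
  dot2 (sub2 (p i) (p j)) (sub2 (vecv x i) (vecv x j))
  - norm2 (sub2 (p i) (p j)) * (tcoord x i + tcoord x j).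

Lemma Cf_lin a x y i j : Cf (a *: x + y) i j = a * Cf x i j + Cf y i j.
Proof. rewrite /Cf /vecv /vec1 /vec2 /tcoord /dot2 /sub2 /= !mxE; ring. Qed.
Lemma t_lin a (x y : 'rV[R]_M) j : tcoord (a *: x + y) j = a * tcoord x j + tcoord y j.
Proof. by rewrite /tcoord !mxE. Qed.
Lemma v1_lin a (x y : 'rV[R]_M) j : vec1 (a *: x + y) j = a * vec1 x j + vec1 y j.
Proof. by rewrite /vec1 !mxE. Qed.
Lemma v2_lin a (x y : 'rV[R]_M) j : vec2 (a *: x + y) j = a * vec2 x j + vec2 y j.
Proof. by rewrite /vec2 !mxE. Qed.

Definition Kf {I : finType} (c d : I -> R) := \sum_i `|d i| / c i.

Lemma Kf_ge0 {I : finType} (c d : I -> R) : (forall i, 0 < c i) -> 0 <= Kf c d.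
Proof. by move=> hc; apply: sumr_ge0 => i _; rewrite divr_ge0 // ltW. Qed.

Lemma Kf_ok {I : finType} (c d : I -> R) : (forall i, 0 < c i) ->
  forall i, 0 <= Kf c d * c i + d i.
Proof.
move=> hc i.
have h1 : `|d i| / c i <= Kf c d.
  rewrite /Kf (bigD1 i) //= lerDl; apply: sumr_ge0 => k _.
  by rewrite divr_ge0 // ltW.
have h2 : `|d i| <= Kf c d * c i.
  rewrite -[X in X <= _](divfK (x := c i)) ?(gt_eqF (hc i)) //.
  by rewrite ler_wpM2r // ltW.
have h3 : - `|d i| <= d i := lerNnormlW (lexx _).
by rewrite -subr_ge0 opprK in h3 *; rewrite -(addrNK `|d i| (_ + _)); lra.
Qed.

Lemma Kmono (K1 K2 c d : R) : 0 <= K1 * c + d -> 0 <= K2 -> 0 < c ->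
  0 <= (K1 + K2) * c + d.
Proof.
move=> h hK hc; rewrite mulrDl addrAC; apply: addr_ge0 => //.
by apply: mulr_ge0 => //; apply: ltW.
Qed.

Definition cP (x0 : 'rV[R]_M) (ij : 'I_N * 'I_N) :=
  if (ij.1 < ij.2)%N then Cf x0 ij.1 ij.2 else 1.
Definition dP (y : 'rV[R]_M) (ij : 'I_N * 'I_N) :=
  if (ij.1 < ij.2)%N then Cf y ij.1 ij.2 else 0.
Definition Kp (x0 y : 'rV[R]_M) := Kf (cP x0) (dP y) + Kf (tcoord x0) (tcoord y).

Definition interior (x0 : 'rV[R]_M) := inS x0 /\
  (forall i j : 'I_N, (i < j)%N -> 0 < Cf x0 i j) /\ (forall j, 0 < tcoord x0 j).

Lemma inS_lin a (x y : 'rV[R]_M) : inS x -> inS y -> inS (a *: x + y).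
Proof.
move=> [h1 [h2 h3]] [g1 [g2 g3]].
by rewrite /inS !v1_lin !v2_lin h1 h2 h3 g1 g2 g3 mulr0 addr0.
Qed.

Lemma cP_pos x0 : interior x0 -> forall ij, 0 < cP x0 ij.
Proof.
by move=> [_ [hC _]] [i j]; rewrite /cP /=; case: ifP => // /hC.
Qed.

Lemma push (x0 y : 'rV[R]_M) : interior x0 -> inS y -> expansion_cone p (Kp x0 y *: x0 + y).
Proof.
move=> hx hy; have [hS [hC ht]] := hx.
split; first exact: inS_lin.
split.
  move=> i j lij; rewrite -/(Cf _ i j) Cf_lin /Kp.
  apply: Kmono; last exact: hC.
    by have := @Kf_ok _ (cP x0) (dP y) (cP_pos x0 hx) (i, j); rewrite /cP /dP /= lij.
  by apply: Kf_ge0 => k; exact: ht.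
move=> j; rewrite t_lin /Kp [Kf (cP _) _ + _]addrC.
apply: Kmono; last exact: ht.
  exact: Kf_ok.
by apply: Kf_ge0; exact: cP_pos x0 hx.
Qed.


Definition mkx (f1 f2 f3 : 'I_N -> R) : 'rV[R]_M :=
  \row_k match split k with
         | inl k' => match split k' with inl i => f1 i | inr i => f2 i end
         | inr i => f3 i end.
Lemma mkx1 f1 f2 f3 i : vec1 (mkx f1 f2 f3) i = f1 i.
Proof. by rewrite /vec1 mxE (unsplitK (inl _ (lshift N i))) (unsplitK (inl _ i)). Qed.
Lemma mkx2 f1 f2 f3 i : vec2 (mkx f1 f2 f3) i = f2 i.
Proof. by rewrite /vec2 mxE (unsplitK (inl _ (rshift N i))) (unsplitK (inr _ i)). Qed.
Lemma mkx3 f1 f2 f3 i : tcoord (mkx f1 f2 f3) i = f3 i.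
Proof. by rewrite /tcoord mxE (unsplitK (inr _ i)). Qed.

Lemma interior_ex : injective p -> (p (idx1 n)).2 != (p (idx2 n)).2 ->
  exists x0, interior x0.
Proof.
move=> inj hb.
set P1 := p (idx1 n) in hb *; set P2 := p (idx2 n) in hb *.
have hb' : P2.2 - P1.2 != 0 by rewrite subr_eq0 eq_sym.
pose om := (P2.1 - P1.1) / (P2.2 - P1.2).
pose w := mkx (fun i => ((p i).1 - P1.1) - om * ((p i).2 - P1.2))
              (fun i => ((p i).2 - P1.2) + om * ((p i).1 - P1.1)) (fun=> 0).
pose u := mkx (fun=> 0) (fun=> 0) (fun=> 1).
have wS : inS w.
  split; [|split].
  - by rewrite mkx1 -/P1 !subrr mulr0 subr0.
  - by rewrite mkx2 -/P1 !subrr mulr0 addr0.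
  - by rewrite mkx1 -/P2 /om divfK // subrr.
have uS : inS u by rewrite /inS !mkx1 !mkx2.
have pos : forall i j : 'I_N, (i < j)%N -> 0 < dot2 (sub2 (p i) (p j)) (sub2 (p i) (p j)).
  move=> i j lij; rewrite /dot2 /sub2 /= -!expr2 lt_def addr_ge0 ?sqr_ge0 // andbT.
  rewrite paddr_eq0 ?sqr_ge0 // !sqrf_eq0; apply/negP => /andP[ha hc].
  have e : p i = p j.
    move: ha hc; case: (p i) => a1 a2; case: (p j) => b1 b2 /=.
    by rewrite !subr_eq0 => /eqP -> /eqP ->.
  by move: lij; rewrite (inj _ _ e) ltnn.
have hw : forall i j : 'I_N, (i < j)%N -> 0 < Cf w i j.
  move=> i j lij; have := pos i j lij.
  suff -> : Cf w i j = dot2 (sub2 (p i) (p j)) (sub2 (p i) (p j)) by [].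
  by rewrite /Cf /vecv !mkx1 !mkx2 !mkx3 /dot2 /sub2 /=; ring.
have cw : forall ij, 0 < cP w ij by move=> [i j]; rewrite /cP /=; case: ifP => // /hw.
exists ((Kf (cP w) (dP u) + 1) *: w + u).
split; first exact: inS_lin.
split.
  move=> i j lij; rewrite Cf_lin.
  have := @Kf_ok _ (cP w) (dP u) cw (i, j); rewrite /cP /dP /= lij => h.
  have := hw i j lij; rewrite mulrDl mul1r; lra.
by move=> j; rewrite t_lin !mkx3 mulr0 add0r ltr01.
Qed.

Definition i1 : 'I_M := lshift N (lshift N (idx1 n)).
Definition i2 : 'I_M := lshift N (rshift N (idx1 n)).
Definition i3 : 'I_M := lshift N (lshift N (idx2 n)).
Definition ex : seq 'I_M := [:: i1; i2; i3].
Definition dl (k : 'I_M) : 'rV[R]_M := delta_mx ord0 k.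
Definition E := [seq dl k | k <- enum 'I_M & k \notin ex].

Lemma inS_ex (x : 'rV[R]_M) : inS x -> forall k, k \in ex -> x ord0 k = 0.
Proof.
by move=> [h1 [h2 h3]] k; rewrite !inE => /or3P [] /eqP ->.
Qed.

Lemma inS_span (x : 'rV[R]_M) : inS x -> (x \in <<E>>)%VS.
Proof.
move=> hx; rewrite [x]matrix_sum_delta big_ord1.
rewrite (bigID (fun k => k \in ex)) /= big1 ?add0r; last first.
  by move=> k hk; rewrite (inS_ex x hx k hk) scale0r.
apply: memv_suml => k hk; apply: memvZ; apply: memv_span; apply/mapP; exists k => //.
by rewrite mem_filter hk mem_enum.
Qed.

Lemma dl_S k : k \notin ex -> inS (dl k).
Proof.
rewrite !inE !negb_or => /and3P[h1 h2 h3].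
by rewrite /inS /vec1 /vec2 /dl !mxE !eqxx /= -/i1 -/i2 -/i3 !(eq_sym _ k) (negbTE h1) (negbTE h2) (negbTE h3).
Qed.

Lemma free_full : free [seq dl k | k <- enum 'I_M].
Proof.
rewrite /free size_map size_enum_ord eqn_leq; apply/andP; split.
  by have := dim_span [seq dl k | k <- enum 'I_M]; rewrite size_map size_enum_ord.
have eM : \dim (fullv : {vspace 'rV[R]_M}) = M.
  by rewrite dimvf dim_matrix mul1r.
rewrite -[X in (X <= _)%N]eM.
apply: dimvS; apply/subvP => x _.
rewrite [x]matrix_sum_delta big_ord1.
apply: memv_suml => k _; apply: memvZ; apply: memv_span; apply/mapP; exists k => //.
by rewrite mem_enum.
Qed.

Lemma cnt (T : finType) (P : pred T) : count P (enum T) = #|P|.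
Proof. by rewrite cardE -size_filter enumT. Qed.

Lemma free_E : free E.
Proof.
pose pv (v : 'rV[R]_M) := [&& v ord0 i1 == 0, v ord0 i2 == 0 & v ord0 i3 == 0].
have -> : E = filter pv [seq dl k | k <- enum 'I_M].
  rewrite /E filter_map; congr (map dl _); apply: eq_filter => k.
  rewrite /preim /pv /dl /= !mxE !eqxx /= !pnatr_eq0 !eqb0 !inE !negb_or.
  by rewrite !(eq_sym k).
exact: filter_free free_full.
Qed.

Lemma size_E : size E = (M - 3)%N.
Proof.
rewrite size_map size_filter cnt.
have hu : uniq ex by [].
have := cardC (mem ex); rewrite card_ord (card_uniqP hu) /=.
have -> : #|[pred k | k \notin ex]| = #|[predC ex]| by apply: eq_card => k; rewrite !inE.
by move/(congr1 (fun m => (m - 3)%N)); rewrite addKn.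
Qed.

End S.

Theorem mainTheorem9 (R : realType) (n : nat) (p : 'I_n.+2 -> R * R) :
  injective p ->
  ~ collinear p ->
  (p (idx1 n)).2 != (p (idx2 n)).2 ->
  (exists X : seq 'rV[R]_(n.+2 + n.+2 + n.+2),
      (forall x, x \in X -> expansion_cone p x) /\
      \dim (span X) = (3 * n.+2 - 3)%N) /\
  (forall x : 'rV[R]_(n.+2 + n.+2 + n.+2),
      expansion_cone p x -> expansion_cone p (- x) -> x = 0).
Proof.
move=> inj hnc hb.
split; last exact: (pointed _ _ _ hnc hb).
have [x0 hx0] := interior_ex _ _ _ inj hb.
pose X := x0 :: [seq Kp R n p x0 e *: x0 + e | e <- E R n].
have hX : forall x, x \in X -> expansion_cone p x.
  move=> x; rewrite in_cons => /orP[/eqP -> | /mapP[e he ->]].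
    have [hS [hC ht]] := hx0; split => //; split.
      by move=> i j lij; apply: ltW; exact: hC.
    by move=> j; apply: ltW.
  apply: (push _ _ _ _ _ hx0).
  move/mapP: he => [k]; rewrite mem_filter => /andP[hk _] ->.
  exact: dl_S.
exists X; split => //.
have h1 : (<<X>> <= <<E R n>>)%VS.
  by apply/span_subvP => x /hX [hS _]; exact: inS_span.
have h2 : (<<E R n>> <= <<X>>)%VS.
  apply/span_subvP => e he.
  have -> : e = (Kp R n p x0 e *: x0 + e) - Kp R n p x0 e *: x0 by rewrite addrC addKr.
  apply: memvB.
    by apply: memv_span; rewrite in_cons; apply/orP; right; apply/mapP; exists e.
  by apply: memvZ; apply: memv_span; exact: mem_head.
have -> : <<X>>%VS = <<E R n>>%VS by apply/eqP; rewrite eqEdim h1 dimvS.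
rewrite (eqP (free_E R n)) size_E.
by rewrite !mulSn mul0n addn0 addnA.
Qed.
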